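(* $rx_3(K_{2,t})=5$ for every $9\leq t\leq 20$, and $rx_3(K_{2,t})\geq 6$ for every $t\geq 21$.
   Context: An edge coloring of a graph $G$ is any assignment of colors to the edges (adjacent edges may receive the same color). A tree $T$ in an edge-colored graph is a rainbow tree if no two edges of $T$ have the same color. For $S\subseteq V(G)$, an $S$-tree is a subtree of $G$ containing all vertices of $S$. A $3$-rainbow coloring of $G$ is an edge coloring such that for every set $S$ of $3$ vertices of $G$ there is a rainbow $S$-tree in $G$. The $3$-rainbow index $rx_3(G)$ is the minimum number of colors in a $3$-rainbow coloring of $G$. $K_{2,t}$ denotes the complete bipartite graph with parts of sizes $2$ and $t$. *)

(* Defs.v *)
From HB Require Import structures.
From mathcomp Require Import all_boot.
Set Implicit Arguments. Unset Strict Implicit. Unset Printing Implicit Defensive.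

(* A simple graph is a symmetric irreflexive relation e on a finType V.
   Edges are represented as 2-element vertex sets {x, y}. *)
Definition edgeb (V : finType) (e : rel V) (A : {set V}) : bool :=
  [exists x, [exists y, e x y && (A == [set x; y])]].

Definition frel_of (V : finType) (F : {set {set V}}) : rel V :=
  fun x y => [set x; y] \in F.

Definition is_subtree (V : finType) (e : rel V) (W : {set V})
    (F : {set {set V}}) : Prop :=
  [/\ W != set0,
      (forall A, A \in F -> edgeb e A),
      (forall A, A \in F -> A \subset W),
      (forall x y, x \in W -> y \in W -> connect (frel_of F) x y)
    & (forall s : seq V, uniq s -> 3 <= size s -> ~~ cycle (frel_of F) s)].

Definition rainbow (V : finType) (k : nat) (col : {set V} -> 'I_k)
    (F : {set {set V}}) : Prop :=
  forall A B, A \in F -> B \in F -> col A = col B -> A = B.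

Definition rainbow3_coloring (V : finType) (e : rel V) (k : nat)
    (col : {set V} -> 'I_k) : Prop :=
  forall S : {set V}, #|S| = 3 ->
    exists (W : {set V}) (F : {set {set V}}), [/\ S \subset W, is_subtree e W F & rainbow col F].

Definition rainbow3_colorable (V : finType) (e : rel V) (k : nat) : Prop :=
  exists col : {set V} -> 'I_k, rainbow3_coloring e col.

Definition rx3_is (V : finType) (e : rel V) (n : nat) : Prop :=
  rainbow3_colorable e n /\ (forall k, k < n -> ~ rainbow3_colorable e k).

Definition K2t (t : nat) : rel ('I_2 + 'I_t)%type :=
  fun x y => match x, y with
             | inl _, inr _ | inr _, inl _ => true
             | _, _ => false
             end.
Arguments K2t t : clear implicits.

(* Main.v *)
From HB Require Import structures.
Require Import Defs.
From mathcomp Require Import all_boot.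
From mathcomp Require Import zify.
Set Implicit Arguments. Unset Strict Implicit. Unset Printing Implicit Defensive.

Definition i0 : 'I_2 := @Ordinal 2 0 isT.
Definition i1 : 'I_2 := @Ordinal 2 1 isT.

Lemma I2_cases (j : 'I_2) : j = i0 \/ j = i1.
Proof. case: j => [[|[|//]]] h; [left|right]; exact: val_inj. Qed.

Lemma i0i1 : i0 != i1. Proof. by []. Qed.

Lemma edge_form t (A : {set ('I_2 + 'I_t)}) :
  edgeb (K2t t) A -> exists j w, A = [set inl j; inr w].
Proof.
case/existsP => x /existsP [y /andP [exy /eqP ->]].
case: x y exy => [j|w] [j'|w'] //= _; first by exists j, w'.
by exists j', w; rewrite setUC.
Qed.

Lemma set2_inl_inr t j w (x y : 'I_2 + 'I_t) :
  [set x; y] = [set inl j; inr w] ->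
  (x = inl j /\ y = inr w) \/ (x = inr w /\ y = inl j).
Proof.
move=> E.
have hx : x \in [set inl j; inr w] by rewrite -E set21.
have hy : y \in [set inl j; inr w] by rewrite -E set22.
have hj : inl j \in [set x; y] by rewrite E set21.
have hw : inr w \in [set x; y] by rewrite E set22.
move: hx hy hj hw; rewrite !inE.
by case/orP => /eqP -> ; case/orP => /eqP ->; rewrite ?eqxx //=; auto.
Qed.

Lemma eq_edge t j j' (x y : 'I_t) :
  ([set inl j; inr x] == [set inl j'; inr y] :> {set 'I_2 + 'I_t}) = (j == j') && (x == y).
Proof.
apply/idP/idP => [/eqP /set2_inl_inr [[[->] [->]]|[]] //| /andP [/eqP -> /eqP ->] //].
by rewrite !eqxx.
Qed.

Lemma frel_form t (F : {set {set ('I_2 + 'I_t)}}) x y :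
  (forall A, A \in F -> edgeb (K2t t) A) -> frel_of F x y ->
  (exists j w, x = inl j /\ y = inr w) \/ (exists j w, x = inr w /\ y = inl j).
Proof.
move=> hF hxy; have [j [w E]] := edge_form (hF _ hxy).
case: (set2_inl_inr E) => [[-> ->]|[-> ->]]; [left|right]; by exists j, w.
Qed.

Lemma frel_sym T (F : {set {set T}}) : symmetric (frel_of F).
Proof. by move=> x y; rewrite /frel_of setUC. Qed.

Lemma incident (T : finType) (F : {set {set T}}) x y :
  x != y -> connect (frel_of F) x y -> exists z, frel_of F x z.
Proof.
move=> nxy /connectP [[|z p] /= hp hy]; first by rewrite hy eqxx in nxy.
by exists z; case/andP: hp.
Qed.

Lemma incident_w t (F : {set {set ('I_2 + 'I_t)}}) (x y : 'I_t) :
  (forall A, A \in F -> edgeb (K2t t) A) -> x != y ->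
  connect (frel_of F) (inr x) (inr y) -> exists j, [set inl j; inr x] \in F.
Proof.
move=> hF nxy hc; have [|z hz] := incident _ hc.
  by apply: contra nxy => /eqP [->].
case: (frel_form hF hz) => [[j [w [//]]]|[j [w [[Ex] Ez]]]]; subst.
by exists j; rewrite setUC.
Qed.

Lemma rb_edge t k (col : {set ('I_2 + 'I_t)} -> 'I_k) F j j' (x y : 'I_t) :
  rainbow col F -> [set inl j; inr x] \in F -> [set inl j'; inr y] \in F ->
  col [set inl j; inr x] = col [set inl j'; inr y] -> j = j' /\ x = y.
Proof.
move=> rb h1 h2 /(rb _ _ h1 h2) /eqP; rewrite eq_edge => /andP [/eqP -> /eqP ->] //.
Qed.

Lemma connect_inv (T : finType) (e : rel T) (P : pred T) :
  (forall x y, P x -> e x y -> P y) -> forall x y, connect e x y -> P x -> P y.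
Proof.
move=> H x y /connectP [p pth ->]; elim: p x pth => //= z p IH x /andP [exz pz] Px.
exact: IH pz (H _ _ Px exz).
Qed.

Lemma noconn_closure t (F : {set {set ('I_2 + 'I_t)}}) j0 (x y : 'I_t) :
  (forall A, A \in F -> edgeb (K2t t) A) ->
  (forall m j j', [set inl j; inr m] \in F -> [set inl j'; inr m] \in F -> j = j') ->
  [set inl j0; inr x] \in F -> connect (frel_of F) (inr x) (inr y) ->
  [set inl j0; inr y] \in F.
Proof.
move=> hF noc hx hc.
pose P := fun v : 'I_2 + 'I_t => (v == inl j0) || ([set inl j0; v] \in F).
suff : P (inr y) by [].
apply: (connect_inv _ hc); last by rewrite /P hx orbT.
move=> a b; rewrite /P => /orP [/eqP -> hab | ha hab].
  by rewrite /frel_of in hab; rewrite hab orbT.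
case: (frel_form hF hab) => [[j [w [Ea Eb]]] | [j [w [Ea Eb]]]].
  rewrite Ea in ha; have [j2 [w2 E2]] := edge_form (hF _ ha).
  by case: (set2_inl_inr E2) => [[_ E4]|[E4 _]].
rewrite Ea Eb in hab ha; rewrite Eb.
have hab' : [set inl j; inr w] \in F by rewrite /frel_of setUC in hab.
by rewrite (noc _ _ _ ha hab') eqxx.
Qed.

Lemma pig3a (p : bool) (c1 c2 c3 : 'I_4) :
  ~~ [&& odd c1 == p, odd c2 == p, odd c3 == p & uniq [:: c1; c2; c3]].
Proof.
by move: c1 c2 c3 => [[|[|[|[|//]]]] ?] [[|[|[|[|//]]]] ?] [[|[|[|[|//]]]] ?]; case: p.
Qed.

Lemma pig3b (q : bool) (c1 c2 c3 : 'I_4) :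
  ~~ [&& (1 < c1) == q, (1 < c2) == q, (1 < c3) == q & uniq [:: c1; c2; c3]].
Proof.
by move: c1 c2 c3 => [[|[|[|[|//]]]] ?] [[|[|[|[|//]]]] ?] [[|[|[|[|//]]]] ?]; case: q.
Qed.

Lemma pig4 (p q : bool) (c1 c2 c3 c4 : 'I_4) :
  ~~ [&& odd c1 == p, (1 < c2) == q, (odd c3 == p) || ((1 < c3) == q),
         (odd c4 == p) || ((1 < c4) == q) & uniq [:: c1; c2; c3; c4]].
Proof.
by move: c1 c2 c3 c4 => [[|[|[|[|//]]]] ?] [[|[|[|[|//]]]] ?] [[|[|[|[|//]]]] ?] [[|[|[|[|//]]]] ?]; case: p; case: q.
Qed.

Lemma tri t k (col : {set ('I_2 + 'I_t)} -> 'I_k) : rainbow3_coloring (K2t t) col ->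
  forall i j l : 'I_t, uniq [:: i; j; l] ->
  exists F : {set {set ('I_2 + 'I_t)}}, [/\ (forall A, A \in F -> edgeb (K2t t) A), rainbow col F &
     forall x y, x \in [:: i; j; l] -> y \in [:: i; j; l] -> connect (frel_of F) (inr x) (inr y)].
Proof.
move=> rc i j l u.
pose s := [seq inr x | x <- [:: i; j; l]] : seq ('I_2 + 'I_t).
have us : uniq s by rewrite map_inj_uniq // => a b [].
have [W [F [sub [_ hE _ hc _] rb]]] := rc [set x in s] (etrans (cardsE _) (card_uniqP us)).
exists F; split => // x y hx hy; apply: hc; apply: (subsetP sub); rewrite inE; exact: map_f.
Qed.

Lemma uniq3 (T : eqType) (i j l : T) : uniq [:: i; j; l] -> [/\ i != j, i != l & j != l].
Proof. by rewrite /= !inE !negb_or => /andP [/andP [-> ->] /andP [-> _]]. Qed.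

Lemma inc3 t (F : {set {set ('I_2 + 'I_t)}}) (i j l : 'I_t) :
  uniq [:: i; j; l] -> (forall A, A \in F -> edgeb (K2t t) A) ->
  (forall x y, x \in [:: i; j; l] -> y \in [:: i; j; l] -> connect (frel_of F) (inr x) (inr y)) ->
  forall x, x \in [:: i; j; l] -> exists jx, [set inl jx; inr x] \in F.
Proof.
move=> u hF hc x hx; have [nij nil njl] := uniq3 u.
move: hx; rewrite !inE => /or3P [] /eqP ->.
- apply: (incident_w hF nij); apply: hc; by rewrite !inE eqxx ?orbT.
- apply: (incident_w (y := i) hF); [by rewrite eq_sym | apply: hc; by rewrite !inE eqxx ?orbT].
- apply: (incident_w (y := i) hF); [by rewrite eq_sym | apply: hc; by rewrite !inE eqxx ?orbT].
Qed.

Lemma rb_uniq (T : finType) k (col : {set T} -> 'I_k) F (es : seq {set T}) :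
  rainbow col F -> {subset es <= F} -> uniq es -> uniq (map col es).
Proof.
move=> rb sub u; rewrite map_inj_in_uniq // => A B hA hB; apply: rb; exact: sub.
Qed.

Lemma count_fibers t (C : finType) (g : 'I_t -> C) (Q : pred C) m :
  (forall x, Q (g x)) -> (forall c, #|[pred x | g x == c]| <= m) -> t <= #|Q| * m.
Proof.
move=> hQ hm.
have -> : t = \sum_(x : 'I_t) 1 by rewrite sum1_card card_ord.
rewrite (partition_big g Q) //= -sum_nat_const.
apply: leq_sum => c _; apply: leq_trans (hm c); rewrite -sum1_card; exact: leqnn.
Qed.

Lemma fiber2 t (C : finType) (g : 'I_t -> C) c :
  (forall i j l, uniq [:: i; j; l] -> g i = c -> g j = c -> g l = c -> False) ->
  #|[pred x | g x == c]| <= 2.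
Proof.
move=> H; rewrite leqNgt; apply/negP => h3.
have u := enum_uniq [pred x | g x == c].
have mem := mem_enum [pred x | g x == c].
move: h3 u mem; rewrite cardE.
case: (enum _) => [|i [|j [|l s]]] // _ u mem.
have u3 : uniq [:: i; j; l] := subseq_uniq (prefix_subseq [:: i; j; l] s) u.
apply: (H i j l u3); apply/eqP; [have := mem i | have := mem j | have := mem l];
  by rewrite !inE eqxx ?orbT => <-.
Qed.

Definition other5 (c : 'I_5) : 'I_5 := if c == ord0 then ord_max else ord0.
Lemma other5_neq c : other5 c != c.
Proof. by rewrite /other5; case: (c =P ord0) => [->|/eqP ne]; [| rewrite eq_sym]. Qed.

Lemma pig_set2 (T : finType) (p q c1 c2 c3 : T) :
  c1 \in [set p; q] -> c2 \in [set p; q] -> c3 \in [set p; q] ->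
  c1 != c2 -> c1 != c3 -> c2 != c3 -> False.
Proof.
rewrite !inE => /orP [] /eqP -> /orP [] /eqP -> /orP [] /eqP ->; by rewrite ?eqxx.
Qed.

Lemma bound20 t (col : {set ('I_2 + 'I_t)} -> 'I_5) : rainbow3_coloring (K2t t) col -> t <= 20.
Proof.
move=> rc.
pose a x := col [set inl i0; inr x]; pose b x := col [set inl i1; inr x].
pose g x : {set 'I_5} := [set a x; if a x == b x then other5 (a x) else b x].
have hcol : forall x j0, col [set inl j0; inr x] \in g x.
  move=> x j0; case: (I2_cases j0) => ->; rewrite !inE; first by rewrite eqxx.
  by case: (a x =P b x) => [->|_]; rewrite eqxx ?orbT.
have card_g : forall x, #|g x| == 2.
  move=> x; rewrite cards2; case: (a x =P b x) => [E|/eqP ne].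
    by rewrite E (eq_sym (b x)) other5_neq.
  by rewrite ne.
apply: (leq_trans (count_fibers (Q := fun B : {set 'I_5} => #|B| == 2) card_g _)).
  move=> c; apply: fiber2 => i j l u gi gj gl.
  have [F [hF rb hc]] := tri rc u.
  have [nij nil njl] := uniq3 u.
  have inc := inc3 u hF hc.
  have [ji Ei] := inc i (mem_head _ _).
  have mj : j \in [:: i; j; l] by rewrite !inE eqxx orbT.
  have ml : l \in [:: i; j; l] by rewrite !inE eqxx !orbT.
  have [jj Ej] := inc j mj.
  have [jl El] := inc l ml.
  have := hcol i ji; have := hcol j jj; have := hcol l jl.
  rewrite gi gj gl; move: (gi) => <-.
  have ne : forall j1 j2 (x y : 'I_t), x != y -> [set inl j1; inr x] \in F ->
      [set inl j2; inr y] \in F -> col [set inl j1; inr x] != col [set inl j2; inr y].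
    move=> j1 j2 x y nxy h1 h2; apply/eqP => /(rb_edge rb h1 h2) [_ exy].
    by rewrite exy eqxx in nxy.
  move=> hl hj hi; exact: (pig_set2 hi hj hl (ne _ _ _ _ nij Ei Ej) (ne _ _ _ _ nil Ei El) (ne _ _ _ _ njl Ej El)).
have -> : #|(fun B : {set 'I_5} => #|B| == 2)| = 10.
  rewrite (_ : 10 = 'C(#|'I_5|, 2)); last by rewrite card_ord.
  by rewrite -card_draws; apply: eq_card => B; rewrite inE.
by [].
Qed.

Lemma pig5 (c1 c2 c3 c4 c5 : 'I_4) : ~~ uniq [:: c1; c2; c3; c4; c5].
Proof.
apply/negP => /card_uniqP h; have := max_card (mem [:: c1; c2; c3; c4; c5]).
by rewrite h card_ord.
Qed.

Lemma bound8 t (col : {set ('I_2 + 'I_t)} -> 'I_4) : rainbow3_coloring (K2t t) col -> t <= 8.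
Proof.
move=> rc.
pose g x : bool * bool := (odd (col [set inl i0; inr x]), 1 < col [set inl i1; inr x]).
apply: (leq_trans (count_fibers (Q := predT) (g := g) (m := 2) (fun _ => isT) _)); last first.
  by rewrite card_prod !card_bool.
move=> [p q]; apply: fiber2 => i j l u gi gj gl.
have [F [hF rb hc]] := tri rc u.
have [nij nil njl] := uniq3 u.
have inc := inc3 u hF hc.
have mi : i \in [:: i; j; l] by rewrite !inE eqxx.
have mj : j \in [:: i; j; l] by rewrite !inE eqxx orbT.
have ml : l \in [:: i; j; l] by rewrite !inE eqxx !orbT.
have [ji Ei] := inc i mi.
have [jj Ej] := inc j mj.
have [jl El] := inc l ml.
have ga : forall x, g x = (p, q) -> odd (col [set inl i0; inr x]) == p by move=> x [-> _].
have gb : forall x, g x = (p, q) -> (1 < col [set inl i1; inr x]) == q by move=> x [_ ->].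
have gc : forall x j0, g x = (p, q) ->
    (odd (col [set inl j0; inr x]) == p) || ((1 < col [set inl j0; inr x]) == q).
  move=> x j0 gx; case: (I2_cases j0) => ->; by rewrite ?ga ?gb ?orbT.
have U := rb_uniq rb.
case: (boolP [exists m, ([set inl i0; inr m] \in F) && ([set inl i1; inr m] \in F)]).
  case/existsP => m /andP [m0 m1].
  have four : forall x y z, uniq [:: x; y; z] -> g x = (p, q) -> g y = (p, q) -> g z = (p, q) ->
      [set inl i0; inr x] \in F -> [set inl i1; inr x] \in F ->
      forall jy jz, [set inl jy; inr y] \in F -> [set inl jz; inr z] \in F -> False.
    move=> x y z uxyz gx gy gz hx0 hx1 jy jz hy hz.
    have [nxy nxz nyz] := uniq3 uxyz.
    have es : uniq [:: [set inl i0; inr x]; [set inl i1; inr x]; [set inl jy; inr y]; [set inl jz; inr z]].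
      by rewrite /= !inE !eq_edge (negbTE nxy) (negbTE nxz) (negbTE nyz) !andbF.
    have sub4 : {subset [:: [set inl i0; inr x]; [set inl i1; inr x]; [set inl jy; inr y]; [set inl jz; inr z]] <= F}.
      by move=> A; rewrite !inE => /or4P [] /eqP ->.
    have H : uniq [:: col [set inl i0; inr x]; col [set inl i1; inr x];
                      col [set inl jy; inr y]; col [set inl jz; inr z]] := U _ sub4 es.
    have := pig4 p q (col [set inl i0; inr x]) (col [set inl i1; inr x])
                     (col [set inl jy; inr y]) (col [set inl jz; inr z]).
    by rewrite (ga x gx) (gb x gx) (gc y jy gy) (gc z jz gz) H.
  case: (boolP (m \in [:: i; j; l])).
    rewrite !inE => /or3P [] /eqP E; subst m.
    - exact: (four i j l u gi gj gl m0 m1 _ _ Ej El).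
    - apply: (four j i l _ gj gi gl m0 m1 _ _ Ei El).
      by rewrite /= !inE !negb_or eq_sym nij njl nil.
    - apply: (four l i j _ gl gi gj m0 m1 _ _ Ei Ej).
      by rewrite /= !inE !negb_or eq_sym nil eq_sym njl nij.
  rewrite !inE !negb_or => /and3P [nmi nmj nml].
  have es : uniq [:: [set inl i0; inr m]; [set inl i1; inr m]; [set inl ji; inr i];
                    [set inl jj; inr j]; [set inl jl; inr l]].
    by rewrite /= !inE !eq_edge (negbTE nmi) (negbTE nmj) (negbTE nml) (negbTE nij) (negbTE nil) (negbTE njl) !andbF.
  have sub5 : {subset [:: [set inl i0; inr m]; [set inl i1; inr m]; [set inl ji; inr i];
                    [set inl jj; inr j]; [set inl jl; inr l]] <= F}.
    by move=> A; rewrite !inE => /orP [/eqP ->|/or4P [] /eqP ->].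
  have H : uniq [:: col [set inl i0; inr m]; col [set inl i1; inr m]; col [set inl ji; inr i];
                    col [set inl jj; inr j]; col [set inl jl; inr l]] := U _ sub5 es.
  by rewrite (negbTE (pig5 _ _ _ _ _)) in H.
rewrite negb_exists => /forallP noc'.
have noc : forall m j1 j2, [set inl j1; inr m] \in F -> [set inl j2; inr m] \in F -> j1 = j2.
  move=> m j1 j2 h1 h2; have := noc' m.
  by case: (I2_cases j1) => E1; case: (I2_cases j2) => E2; subst; rewrite ?h1 ?h2.
have Eij := noconn_closure hF noc Ei (hc _ _ mi mj).
have Eil := noconn_closure hF noc Ei (hc _ _ mi ml).
have es : uniq [:: [set inl ji; inr i]; [set inl ji; inr j]; [set inl ji; inr l]].
  by rewrite /= !inE !eq_edge (negbTE nij) (negbTE nil) (negbTE njl) !andbF.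
have sub : {subset [:: [set inl ji; inr i]; [set inl ji; inr j]; [set inl ji; inr l]] <= F}.
  by move=> A; rewrite !inE => /or3P [] /eqP ->.
have H : uniq [:: col [set inl ji; inr i]; col [set inl ji; inr j]; col [set inl ji; inr l]] := U _ sub es.
case: (I2_cases ji) => E; rewrite E in H.
  by have := pig3a p (col [set inl i0; inr i]) (col [set inl i0; inr j]) (col [set inl i0; inr l]); rewrite (ga i gi) (ga j gj) (ga l gl) H.
by have := pig3b q (col [set inl i1; inr i]) (col [set inl i1; inr j]) (col [set inl i1; inr l]); rewrite (gb i gi) (gb j gj) (gb l gl) H.
Qed.
Definition La : seq nat := [:: 4;0;3;4;1;2;3;2;2;4;1;2;3;4;1;0;3;0;0;1].
Definition Lb : seq nat := [:: 0;1;1;3;4;3;0;4;1;2;2;0;2;1;0;2;4;4;3;3].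
Definition na (x : nat) : nat := nth 0 La x.
Definition nb (x : nat) : nat := nth 0 Lb x.

Definition coveredN (Lu Lv : seq nat) (x : nat) : bool :=
  if x == 0 then Lu != [::] else if x == 1 then Lv != [::] else (x.-2 \in Lu) || (x.-2 \in Lv).

Definition goodN (a b : nat -> nat) (Lu Lv : seq nat) : bool :=
  [&& Lu ++ Lv != [::],
      all (fun x => all (fun y => (x \in Lv) ==> (y \in Lv) ==> (x == y)) Lu) Lu,
      [|| Lu == [::], Lv == [::] | has (fun w => w \in Lv) Lu] &
      uniq (map a Lu ++ map b Lv)].

Fixpoint allbits n : seq (seq bool) :=
  if n is n'.+1 then [seq b :: s | b <- [:: true; false], s <- allbits n'] else [:: [::]].
Fixpoint splitb (bs : seq bool) (ws : seq nat) : seq nat * seq nat :=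
  match bs, ws with
  | b :: bs', w :: ws' => let p := splitb bs' ws' in if b then (w :: p.1, p.2) else (p.1, w :: p.2)
  | _, _ => ([::], [::]) end.
Definition candsN (ws : seq nat) : seq (seq nat * seq nat) :=
  (ws, [::]) :: ([::], ws) ::
  [seq (m :: filter (fun w => w != m) (splitb bs ws).1,
        m :: filter (fun w => w != m) (splitb bs ws).2) | m <- iota 0 20, bs <- allbits (size ws)].
Definition wsN (s : seq nat) : seq nat := [seq v.-2 | v <- s & 1 < v].
Definition boundok (ws Lu : seq nat) := all (fun w => (w < 9) || has (fun x => w <= x) ws) Lu.
Definition cover3N (x y z : nat) :=
  let ws := wsN [:: x; y; z] in
  has (fun c => [&& coveredN c.1 c.2 x, coveredN c.1 c.2 y, coveredN c.1 c.2 z,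
                    boundok ws (c.1 ++ c.2) & goodN na nb c.1 c.2]) (candsN ws).
Definition checkN := all (fun x => all (fun y => all (fun z => cover3N x y z) (iota y.+1 (21 - y))) (iota x.+1 (21 - x))) (iota 0 22).
Lemma checkN_ok : checkN. Proof. vm_compute. reflexivity. Qed.

Lemma na_lt n : na n < 5.
Proof.
rewrite /na; case: (ltnP n 20) => h; last by rewrite nth_default.
have : all (fun x => x < 5) La by []. by move/allP; apply; rewrite mem_nth.
Qed.
Lemma nb_lt n : nb n < 5.
Proof.
rewrite /nb; case: (ltnP n 20) => h; last by rewrite nth_default.
have : all (fun x => x < 5) Lb by []. by move/allP; apply; rewrite mem_nth.
Qed.

Definition code t (x : 'I_2 + 'I_t) : nat := match x with inl j => val j | inr w => (val w).+2 end.
Lemma code_inj t : injective (@code t).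
Proof.
move=> [j|w] [j'|w'] //= E.
- by congr inl; apply: val_inj.
- by have := ltn_ord j; rewrite E.
- by have := ltn_ord j'; rewrite -E.
- by congr inr; apply: val_inj; case: E.
Qed.
Lemma code_lt t (x : 'I_2 + 'I_t) : code x < t.+2.
Proof. case: x => [j|w] /=; [by apply: leq_trans (ltn_ord j) _ | by rewrite ltnS ltnS ltn_ord]. Qed.

Definition col5 t (A : {set ('I_2 + 'I_t)}) : 'I_5 :=
  if [pick w : 'I_t | A == [set inl i0; inr w]] is Some w then inord (na w)
  else if [pick w : 'I_t | A == [set inl i1; inr w]] is Some w then inord (nb w) else ord0.

Definition colw t (j : 'I_2) (w : 'I_t) : nat := if j == i0 then na w else nb w.
Lemma colw_lt t j (w : 'I_t) : colw j w < 5.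
Proof. rewrite /colw; case: (j == i0); [exact: na_lt | exact: nb_lt]. Qed.

Lemma col5_edge t j (w : 'I_t) : col5 [set inl j; inr w] = inord (colw j w).
Proof.
rewrite /col5 /colw; case: (I2_cases j) => ->; rewrite ?eqxx /=.
  case: pickP => [w' | H]; first by rewrite eq_edge => /andP [_ /eqP ->].
  by have := H w; rewrite eqxx.
case: pickP => [w' | _]; first by rewrite eq_edge.
case: pickP => [w' | H]; first by rewrite eq_edge => /andP [_ /eqP ->].
by have := H w; rewrite eqxx.
Qed.

Definition inF t (Lu Lv : seq nat) (j : 'I_2) (w : 'I_t) : bool :=
  if j == i0 then val w \in Lu else val w \in Lv.
Definition Fof t Lu Lv : {set {set ('I_2 + 'I_t)}} :=
  [set A | [exists j, exists w : 'I_t, inF Lu Lv j w && (A == [set inl j; inr w])]].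
Definition Wof t Lu Lv : {set ('I_2 + 'I_t)} := [set x | coveredN Lu Lv (code x)].

Lemma inFof t Lu Lv j (w : 'I_t) : ([set inl j; inr w] \in Fof t Lu Lv) = inF Lu Lv j w.
Proof.
rewrite inE; apply/existsP/idP => [[j' /existsP [w' /andP [h]]]|h].
  by rewrite eq_edge => /andP [/eqP -> /eqP ->].
by exists j; apply/existsP; exists w; rewrite h eqxx.
Qed.

Lemma Fof_form t Lu Lv A : A \in Fof t Lu Lv -> exists j w, A = [set inl j; inr w] /\ inF Lu Lv j w.
Proof. by rewrite inE => /existsP [j /existsP [w /andP [h /eqP ->]]]; exists j, w. Qed.

Lemma uniq_map_eq (T U : eqType) (f : T -> U) s x y :
  uniq (map f s) -> x \in s -> y \in s -> f x = f y -> x = y.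
Proof.
elim: s => //= a s IH /andP [na us]; rewrite !inE => /orP [/eqP->|xs] /orP [/eqP->|ys] e //.
- by rewrite e map_f in na.
- by rewrite -e map_f in na.
- exact: IH.
Qed.

Lemma cyc_nbrs (T : eqType) (r : rel T) (s : seq T) x :
  uniq s -> 2 < size s -> cycle r s -> x \in s ->
  exists y z, [/\ y \in s, z \in s, y != z, r x y & r z x].
Proof.
move=> us ss cs xs; case: (rot_to xs) => i s' E.
have us' : uniq (x :: s') by rewrite -E rot_uniq.
have cs' : cycle r (x :: s') by rewrite -E rot_cycle.
have ss' : 2 < size (x :: s') by rewrite -E size_rot.
have ms : forall v, v \in x :: s' -> v \in s by move=> v; rewrite -E mem_rot.
case: s' E us' cs' ss' ms => [|y [|a s3]] // E us' cs' ss' ms.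
move: cs'; rewrite /cycle rcons_path => /andP [p1 rzx].
move: p1 => /= /andP [rxy _].
have la : last a s3 \in a :: s3 by exact: mem_last.
exists y, (last a s3); split => //.
- by apply: ms; rewrite !inE eqxx orbT.
- by apply: ms; do 2 rewrite in_cons; rewrite la !orbT.
- move: us' => /= /andP [_ /andP [ny _]]; apply: contra ny => /eqP ->; exact: la.
Qed.

Lemma acyc t (F : {set {set ('I_2 + 'I_t)}}) :
  (forall A, A \in F -> edgeb (K2t t) A) ->
  (forall w w', [set inl i0; inr w] \in F -> [set inl i1; inr w] \in F ->
      [set inl i0; inr w'] \in F -> [set inl i1; inr w'] \in F -> w = w') ->
  forall s, uniq s -> 3 <= size s -> ~~ cycle (frel_of F) s.
Proof.
move=> hF hU s us ss; apply/negP => cs.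
have nb := cyc_nbrs us ss cs.
have wconn : forall w, inr w \in s ->
    [/\ [set inl i0; inr w] \in F, [set inl i1; inr w] \in F & inl i0 \in s].
  move=> w ws; have [y [z [ys zs nyz rwy rzw]]] := nb _ ws.
  case: (frel_form hF rwy) => [[j [w1 [//]]]|[j1 [w1 [[Ew] Ey]]]]; subst.
  case: (frel_form hF rzw) => [[j2 [w2 [Ez [Ew]]]]|[j [w2 [//]]]]; subst.
  have h1 : [set inl j1; inr w2] \in F by rewrite /frel_of setUC in rwy.
  have h2 : [set inl j2; inr w2] \in F by exact: rzw.
  case: (I2_cases j1) => E1; case: (I2_cases j2) => E2; subst; by rewrite ?eqxx in nyz *.
have [w ws] : exists w, inr w \in s.
  case: s us ss cs nb wconn => [|x s'] // _ _ _ nb _.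
  case: x nb => [j|w] nb; last by exists w; rewrite mem_head.
  have [y [z [ys _ _ rxy _]]] := nb _ (mem_head _ _).
  case: (frel_form hF rxy) => [[j' [w [_ Ey]]]|[? [? [//]]]]; subst.
  by exists w.
have [_ _ u0s] := wconn w ws.
have [y [z [ys zs nyz ry rz]]] := nb _ u0s.
case: (frel_form hF ry) => [[j1 [w1 [[Ej] Ey]]]|[? [? [//]]]]; subst.
case: (frel_form hF rz) => [[? [? [//]]]|[j2 [w2 [Ez [Ej]]]]]; subst.
have [a1 b1 _] := wconn w1 ys.
have [a2 b2 _] := wconn w2 zs.
by rewrite (hU _ _ a1 b1 a2 b2) eqxx in nyz.
Qed.

Lemma sound t (Lu Lv : seq nat) : all (fun w => w < t) (Lu ++ Lv) -> goodN na nb Lu Lv ->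
  is_subtree (K2t t) (Wof t Lu Lv) (Fof t Lu Lv) /\ rainbow (@col5 t) (Fof t Lu Lv).
Proof.
move=> /allP hlt /and4P [hne hP2 hP3 hP5].
have ordU : forall n, n \in Lu -> exists w : 'I_t, val w = n.
  move=> n hn; have h : n \in Lu ++ Lv by rewrite mem_cat hn.
  by exists (Ordinal (hlt n h)).
have ordV : forall n, n \in Lv -> exists w : 'I_t, val w = n.
  move=> n hn; have h : n \in Lu ++ Lv by rewrite mem_cat hn orbT.
  by exists (Ordinal (hlt n h)).
have nem : forall (n : nat) (s : seq nat), n \in s -> s != [::] by move=> n [].

have edges : forall A, A \in Fof t Lu Lv -> edgeb (K2t t) A.
  move=> A /Fof_form [j [w [-> _]]].
  by apply/existsP; exists (inl j); apply/existsP; exists (inr w); rewrite eqxx.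
have frU : forall w : 'I_t, val w \in Lu -> frel_of (Fof t Lu Lv) (inr w) (inl i0).
  by move=> w h; rewrite /frel_of setUC inFof.
have frV : forall w : 'I_t, val w \in Lv -> frel_of (Fof t Lu Lv) (inr w) (inl i1).
  by move=> w h; rewrite /frel_of setUC inFof.
have csym := sym_connect_sym (frel_sym (Fof t Lu Lv)).
have hub : Lu != [::] -> Lv != [::] -> connect (frel_of (Fof t Lu Lv)) (inl i1) (inl i0).
  move=> nu nv; move: hP3; rewrite (negbTE nu) (negbTE nv) /= => /hasP [n nu' nv'].
  have [w Ew] := ordU n nu'.
  apply: (@connect_trans _ _ (inr w)); apply: connect1.
    by rewrite frel_sym frV // Ew.
  by rewrite frU // Ew.
pose root := if Lu != [::] then inl i0 else inl i1 : 'I_2 + 'I_t.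
have toroot : forall x, x \in Wof t Lu Lv -> connect (frel_of (Fof t Lu Lv)) x root.
  move=> x; rewrite inE /root; case: x => [j|w] /=.
    case: (I2_cases j) => ->; rewrite /coveredN /=.
      by move=> ->; exact: connect0.
    move=> nv; case: ifP => nu; [exact: hub nu nv | exact: connect0].
  rewrite /coveredN /= => /orP [hu|hv].
    by rewrite (nem _ _ hu); apply: connect1; exact: frU.
  apply: (@connect_trans _ _ (inl i1)); first by apply: connect1; exact: frV.
  case: ifP => nu; [exact: hub (nem _ _ hv) | exact: connect0].
split.
  split.
  - move: hne; case E: (Lu ++ Lv) => [//|n s] _.
    have hn : n \in Lu ++ Lv by rewrite E mem_head.
    apply/set0Pn; exists (inr (Ordinal (hlt n hn))); rewrite inE /coveredN /= -mem_cat //.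
  - exact: edges.
  - move=> A /Fof_form [j [w [-> h]]]; apply/subsetP => x; rewrite !inE.
    move: h; rewrite /inF => h.
    case/orP => /eqP ->; rewrite /coveredN /=.
      by case: (I2_cases j) h => -> /= h; exact: nem h.
    by case: (j == i0) h => h; rewrite h ?orbT.
  - move=> x y hx hy; apply: (connect_trans (toroot x hx)); rewrite csym; exact: toroot.
  - apply: acyc => // w w' a0 a1 b0 b1; apply: val_inj.
    rewrite !inFof /inF /= in a0 a1 b0 b1.
    move/allP: hP2 => /(_ _ a0) /allP /(_ _ b0); by rewrite a1 b1 => /eqP.
move=> A B /Fof_form [j [w [-> hA]]] /Fof_form [j' [w' [-> hB]]].
rewrite !col5_edge => /(congr1 (@nat_of_ord 5)); rewrite !inordK ?colw_lt // /colw.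
move: hA hB; rewrite /inF.
move: hP5; rewrite cat_uniq => /and3P [ua hcross ub].
case: (I2_cases j) => ->; case: (I2_cases j') => -> /= hA hB e.
- by rewrite (val_inj (uniq_map_eq ua hA hB e)).
- by case/hasP: hcross; exists (nb w'); rewrite ?map_f // -e map_f.
- by case/hasP: hcross; exists (nb w); rewrite ?map_f // e map_f.
- by rewrite (val_inj (uniq_map_eq ub hA hB e)).
Qed.

Definition Rgood t (a b c : nat) := exists Lu Lv : seq nat,
  [/\ all (fun w => w < t) (Lu ++ Lv), goodN na nb Lu Lv,
      coveredN Lu Lv a, coveredN Lu Lv b & coveredN Lu Lv c].

Lemma sw12 t a b c : Rgood t a b c -> Rgood t b a c.
Proof. by case=> Lu [Lv [h1 h2 h3 h4 h5]]; exists Lu, Lv. Qed.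
Lemma sw23 t a b c : Rgood t a b c -> Rgood t a c b.
Proof. by case=> Lu [Lv [h1 h2 h3 h4 h5]]; exists Lu, Lv. Qed.

Lemma cover_sorted a b c : a < b -> b < c -> c < 22 -> cover3N a b c.
Proof.
move=> ab bc c22; have := checkN_ok; rewrite /checkN.
move/allP => /(_ a); rewrite mem_iota => /(_ ltac:(lia)).
move/allP => /(_ b); rewrite mem_iota => /(_ ltac:(lia)).
move/allP => /(_ c); rewrite mem_iota => /(_ ltac:(lia)).
done.
Qed.

Lemma cover_R t a b c : 9 <= t -> a < t.+2 -> b < t.+2 -> c < t.+2 -> cover3N a b c -> Rgood t a b c.
Proof.
move=> ht ha hb hc /hasP [[Lu Lv] _ /= /and5P [ca cb cc bd gd]].
exists Lu, Lv; split => //.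
apply/allP => w hw; move/allP: bd => /(_ w hw) /orP [w9 | /hasP [x xws wx]].
  exact: leq_trans w9 ht.
move: xws; rewrite /wsN => /mapP [v]; rewrite mem_filter => /andP [v1 vin] ex.
have vt : v < t.+2 by move: vin; rewrite !inE => /or3P [] /eqP ->.
lia.
Qed.

Lemma R_all t a b c : 9 <= t -> t <= 20 -> a < t.+2 -> b < t.+2 -> c < t.+2 ->
  uniq [:: a; b; c] -> Rgood t a b c.
Proof.
move=> h9 h20 ha hb hc u.
have key : forall x y z, x < t.+2 -> y < t.+2 -> z < t.+2 -> x < y -> y < z -> Rgood t x y z.
  move=> x y z hx hy hz xy yz; apply: cover_R => //; apply: cover_sorted => //; lia.
have step2 : forall x y z, x < t.+2 -> y < t.+2 -> z < t.+2 -> x < y -> y != z -> x != z -> Rgood t x y z.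
  move=> x y z hx hy hz xy nyz nxz; case: (ltngtP y z) => [yz|zy|e]; first exact: key.
    case: (ltngtP x z) => [xz|zx|e]; first by apply: sw23; apply: key.
      by apply: sw23; apply: sw12; apply: key.
    by rewrite e eqxx in nxz.
  by rewrite e eqxx in nyz.
have [nab nac nbc] := uniq3 u.
case: (ltngtP a b) => [ab|ba|e]; first exact: step2.
  by apply: sw12; apply: step2.
by rewrite e eqxx in nab.
Qed.

Lemma colorable5 t : 9 <= t -> t <= 20 -> rainbow3_colorable (K2t t) 5.
Proof.
move=> h9 h20; exists (@col5 t) => S cS.
have us := enum_uniq (mem S); have ms := mem_enum (mem S).
have sz : size (enum S) = 3 by rewrite -cardE.
move: us ms sz; case: (enum S) => [|x [|y [|z [|? ?]]]] // us ms _.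
have uc : uniq [:: code x; code y; code z].
  by move: us; rewrite -(map_inj_uniq (@code_inj t)) => h; exact: h.
have [Lu [Lv [hlt gd cx cy cz]]] := R_all h9 h20 (code_lt x) (code_lt y) (code_lt z) uc.
have [st rb] := sound hlt gd.
exists (Wof t Lu Lv), (Fof t Lu Lv); split => //.
by apply/subsetP => v; rewrite -ms !inE => /or3P [] /eqP ->.
Qed.


Lemma widen_colorable t k m : k <= m -> rainbow3_colorable (K2t t) k -> rainbow3_colorable (K2t t) m.
Proof.
move=> km [col rc]; exists (fun A => widen_ord km (col A)) => S cS.
have [W [F [h1 h2 rb]]] := rc S cS; exists W, F; split => //.
move=> A B hA hB /(congr1 (@nat_of_ord m)) /= e; apply: rb => //; exact: val_inj.
Qed.

Lemma no4 t k : 9 <= t -> k < 5 -> ~ rainbow3_colorable (K2t t) k.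
Proof.
move=> ht hk /(widen_colorable (m := 4)) h.
have [col rc] := h hk; have := bound8 rc; lia.
Qed.

Lemma no5 t k : 21 <= t -> k < 6 -> ~ rainbow3_colorable (K2t t) k.
Proof.
move=> ht hk /(widen_colorable (m := 5)) h.
have [col rc] := h hk; have := bound20 rc; lia.
Qed.

Theorem lemma5 :
  (forall t : nat, 9 <= t <= 20 -> rx3_is (K2t t) 5) /\
  (forall t : nat, 21 <= t -> forall k, k < 6 -> ~ rainbow3_colorable (K2t t) k).
Proof.
split.
  move=> t /andP [h9 h20]; split; first exact: colorable5.
  by move=> k hk; apply: no4.
by move=> t ht k hk; apply: no5.
Qed.
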